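(* Let $G$ be a simple graph with edge ideal $I(G)\subseteq R=\Bbbk[x_1,\ldots,x_N]$. Let $e_1,\ldots,e_s$ be distinct edges of $G$, let $a_1,\ldots,a_s>0$ be integers, and set $t-1=a_1+\cdots+a_s$ and $x^{\mathbf e}=e_1^{a_1}\cdots e_s^{a_s}$, where each edge $e_i=\{p,q\}$ is identified with the monomial $x_px_q$. Assume that $I(G)^t:x^{\mathbf e}$ is a squarefree monomial ideal. Then $$I(G)^t:x^{\mathbf e}=I(G)^{s+1}:(e_1\cdots e_s)=\left(I(G)^2:e_1\right)^s:(e_2\cdots e_s).$$
   Context: The edge ideal of a simple graph $G$ on $[N]$ is $I(G)=(x_ix_j\mid\{i,j\}\in E(G))$. *)

(* Defs.v *)
From HB Require Import structures.
From mathcomp Require Import all_boot all_order all_algebra.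
From mathcomp Require Import mpoly.
Set Implicit Arguments. Unset Strict Implicit. Unset Printing Implicit Defensive.
Import GRing.Theory.
Local Open Scope ring_scope.

Section Ideals.
Variables (N : nat) (k : fieldType).
Local Notation R := {mpoly k[N]}.

Definition ideal_gen (S : R -> Prop) : R -> Prop :=
  fun p => exists n (c g : 'I_n -> R),
    (forall i, S (g i)) /\ p = \sum_(i < n) c i * g i.

Definition ideal_eq (I J : R -> Prop) : Prop := forall p, I p <-> J p.

Definition ideal_mul (I J : R -> Prop) : R -> Prop :=
  ideal_gen (fun p => exists a b, I a /\ J b /\ p = a * b).

Definition ideal_pow (I : R -> Prop) (n : nat) : R -> Prop :=
  iter n (ideal_mul I) (ideal_gen (fun p => p = 1)).

Definition ideal_colon (I : R -> Prop) (f : R) : R -> Prop :=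
  fun p => I (p * f).

Definition squarefree_monomial (p : R) : Prop :=
  exists m : 'X_{1..N}, p = 'X_[m] /\ forall i, (m i <= 1)%N.

Definition squarefree_monomial_ideal (I : R -> Prop) : Prop :=
  exists S : R -> Prop, (forall p, S p -> squarefree_monomial p) /\
    ideal_eq I (ideal_gen S).

Definition simple_graph (G : rel 'I_N) : Prop :=
  ssrbool.symmetric G /\ irreflexive G.

Definition edge_mon (e : 'I_N * 'I_N) : R := 'X_e.1 * 'X_e.2.

Definition edge_ideal (G : rel 'I_N) : R -> Prop :=
  ideal_gen (fun p => exists i j, G i j /\ p = 'X_i * 'X_j).

End Ideals.

(* Main.v *)
Require Import Defs.
From HB Require Import structures.
From mathcomp Require Import all_boot all_order all_algebra.
From mathcomp Require Import mpoly.
From mathcomp Require Import zify.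
Set Implicit Arguments. Unset Strict Implicit. Unset Printing Implicit Defensive.
Import GRing.Theory.
Local Open Scope ring_scope.

Section IdealAlg.
Variables (N : nat) (k : fieldType).
Local Notation R := {mpoly k[N]}.
Local Notation mon := 'X_{1..N}.

Definition mle (a b : mon) := forall i, (a i <= b i)%N.
Definition MI (S : mon -> Prop) : R -> Prop :=
  ideal_gen (fun p => exists m, S m /\ p = 'X_[m]).
Definition MP (Q : mon -> Prop) : R -> Prop :=
  fun p => forall m, m \in msupp p -> Q m.
Definition DS (S : mon -> Prop) (m : mon) := exists n, S n /\ mle n m.

Lemma gen_base (S : R -> Prop) p : S p -> ideal_gen S p.
Proof.
move=> Sp; exists 1%N, (fun _ => 1), (fun _ => p); split => // .
by rewrite big_ord1 mul1r.
Qed.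

Lemma gen_0 (S : R -> Prop) : ideal_gen S 0.
Proof. by exists 0%N, (fun _ => 0), (fun _ => 0); split => [[]|]; rewrite ?big_ord0. Qed.

Lemma gen_add (S : R -> Prop) p q : ideal_gen S p -> ideal_gen S q -> ideal_gen S (p + q).
Proof.
move=> [n1 [c1 [g1 [H1 ->]]]] [n2 [c2 [g2 [H2 ->]]]].
exists (n1 + n2)%N, (fun i => match split i with inl j => c1 j | inr j => c2 j end),
  (fun i => match split i with inl j => g1 j | inr j => g2 j end); split.
  by move=> i; case: (split i).
rewrite big_split_ord /=; congr (_ + _); apply: eq_bigr => i _.
  by have /= -> := unsplitK (inl 'I_n2 i).
by have /= -> := unsplitK (inr 'I_n1 i).
Qed.

Lemma gen_mul (S : R -> Prop) c p : ideal_gen S p -> ideal_gen S (c * p).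
Proof.
move=> [n1 [c1 [g1 [H1 ->]]]]; exists n1, (fun i => c * c1 i), g1; split => //.
by rewrite mulr_sumr; apply: eq_bigr => i _; rewrite mulrA.
Qed.

Lemma gen_sumI (S : R -> Prop) (I : Type) (r : seq I) (F : I -> R) :
  (forall i, ideal_gen S (F i)) -> ideal_gen S (\sum_(i <- r) F i).
Proof.
move=> H; elim: r => [|x r IH]; first by rewrite big_nil; apply: gen_0.
by rewrite big_cons; apply: gen_add.
Qed.

Lemma gen_sub (S T : R -> Prop) : (forall p, S p -> ideal_gen T p) ->
  forall p, ideal_gen S p -> ideal_gen T p.
Proof.
move=> H p [n [c [g [Hg ->]]]]; apply: gen_sumI => i; apply: gen_mul; exact: H.
Qed.

Lemma mle_split (n m : mon) : mle n m -> m = ((m - n) + n)%MM.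
Proof. by move=> H; apply/mnmP => i; rewrite mnmDE mnmBE subnK. Qed.

Lemma msuppMX_in (p : R) f m : m \in msupp (p * 'X_[f]) -> exists m', m' \in msupp p /\ m = (f + m')%MM.
Proof.
rewrite (perm_mem (msuppMX p f)) => /mapP [m' H1 ->]; by exists m'.
Qed.

Lemma MI_char S p : MI S p <-> MP (DS S) p.
Proof.
split.
- move=> [n [c [g [Hg ->]]]] m; rewrite mcoeff_msupp raddf_sum /=.
  case: (boolP [exists i, ((c i * g i)@_m != 0)]).
    move=> /existsP [i Hi]; have [n0 [Sn Eg]] := Hg i.
    rewrite Eg -mcoeff_msupp in Hi; have [m' [_ ->]] := msuppMX_in Hi.
    move=> _; exists n0; split => // j; rewrite mnmDE; lia.
  rewrite negb_exists => /forallP H; rewrite big1 ?eqxx // => i _.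
  by apply/eqP; rewrite -[_ == 0]negbK H.
- move=> H; rewrite [p]mpolyE; apply: gen_sumI => m.
  case: (boolP (m \in msupp p)) => Hm; last first.
    by rewrite (memN_msupp_eq0 Hm) scale0r; apply: gen_0.
  have [n [Sn Hnm]] := H m Hm.
  rewrite (mle_split Hnm) mpolyXD -mul_mpolyC mulrA; apply: gen_mul.
  by apply: gen_base; exists n.
Qed.

Lemma MP_colon Q f p : MP Q (p * 'X_[f]) <-> MP (fun m => Q (m + f)%MM) p.
Proof.
split.
- move=> H m Hm; apply: H; rewrite (perm_mem (msuppMX p f)); apply/mapP.
  by exists m => //; rewrite addmC.
- move=> H m /msuppMX_in [m' [Hm' ->]]; rewrite addmC; exact: H.
Qed.

Lemma gen_ext (S T : R -> Prop) : (forall p, S p <-> T p) -> ideal_eq (ideal_gen S) (ideal_gen T).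
Proof.
move=> H p; split; apply: gen_sub => q Hq; apply: gen_base; by apply/H.
Qed.

Lemma ieq_sym I J : ideal_eq I J -> ideal_eq (N:=N) (k:=k) J I.
Proof. by move=> H p; split => /H. Qed.
Lemma ieq_trans I J K : ideal_eq I J -> ideal_eq J K -> ideal_eq (N:=N) (k:=k) I K.
Proof. by move=> H1 H2 p; split => [/H1/H2|/H2/H1]. Qed.

Lemma mul_ext I I' J J' : ideal_eq I I' -> ideal_eq J J' ->
  ideal_eq (ideal_mul (N:=N) (k:=k) I J) (ideal_mul I' J').
Proof.
move=> HI HJ; apply: gen_ext => p; split => [[a [b [Ha [Hb ->]]]]|[a [b [Ha [Hb ->]]]]];
  exists a, b; split; (try by apply/HI); split => //; by apply/HJ.
Qed.

Lemma pow_ext I I' n : ideal_eq I I' -> ideal_eq (ideal_pow (N:=N) (k:=k) I n) (ideal_pow I' n).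
Proof.
move=> H; elim: n => [|n IH] /=; first by move=> p.
exact: mul_ext.
Qed.

Lemma colon_ext I I' f : ideal_eq I I' -> ideal_eq (ideal_colon (N:=N) (k:=k) I f) (ideal_colon I' f).
Proof. by move=> H p; apply: H. Qed.

Definition Ssum (S T : mon -> Prop) (m : mon) := exists a b, S a /\ T b /\ m = (a + b)%MM.
Definition Epow (S : mon -> Prop) (n : nat) := iter n (Ssum S) (fun m => m = 0%MM).

Lemma MI_mul S T : ideal_eq (ideal_mul (MI S) (MI T)) (MI (Ssum S T)).
Proof.
move=> p; split.
- apply: gen_sub => q [a [b [[n1 [c1 [g1 [H1 ->]]]] [[n2 [c2 [g2 [H2 ->]]]] ->]]]].
  rewrite mulr_suml; apply: gen_sumI => i; rewrite -mulrA; apply: gen_mul.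
  rewrite mulr_sumr; apply: gen_sumI => j; rewrite mulrCA; apply: gen_mul.
  have [m1 [S1 ->]] := H1 i; have [m2 [S2 ->]] := H2 j.
  by apply: gen_base; exists (m1 + m2)%MM; rewrite mpolyXD; split => //; exists m1, m2.
- apply: gen_sub => q [m [[a [b [Sa [Tb ->]]]] ->]].
  apply: gen_base; exists 'X_[a], 'X_[b]; rewrite mpolyXD; split; last split => //.
    by apply: gen_base; exists a.
  by apply: gen_base; exists b.
Qed.

Lemma MI_pow S n : ideal_eq (ideal_pow (MI S) n) (MI (Epow S n)).
Proof.
elim: n => [|n IH] /=.
  apply: gen_ext => p; split => [->|[m [-> ->]]]; last by rewrite mpolyX0.
  by exists 0%MM; rewrite mpolyX0.
apply: ieq_trans (MI_mul _ _); exact: mul_ext.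
Qed.

Lemma MP_ext Q Q' : (forall m, Q m <-> Q' m) -> ideal_eq (MP Q) (MP Q').
Proof. by move=> H p; split => Hp m Hm; apply/H; apply: Hp. Qed.

Lemma MI_MP S : ideal_eq (MI S) (MP (DS S)).
Proof. by move=> p; apply: MI_char. Qed.

Lemma MP_MI Q : (forall m m', Q m -> mle m m' -> Q m') -> ideal_eq (MP Q) (MI Q).
Proof.
move=> H; apply: ieq_trans (ieq_sym (MI_MP Q)); apply: MP_ext => m; split.
  by move=> Qm; exists m; split.
by move=> [n [Qn Hn]]; apply: H Hn.
Qed.

Lemma colon_MP Q f : ideal_eq (ideal_colon (MP Q) 'X_[f]) (MP (fun m => Q (m + f)%MM)).
Proof. move=> p; exact: MP_colon. Qed.

Lemma MP_X Q m : MP Q 'X_[m] <-> Q m.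
Proof.
split; first by apply; rewrite msuppX mem_seq1.
by move=> H m'; rewrite msuppX mem_seq1 => /eqP ->.
Qed.

End IdealAlg.

Local Close Scope ring_scope.

Section Comb.
Variables (N : nat) (G : rel 'I_N) (s : nat) (e : 'I_s -> 'I_N * 'I_N).
Hypothesis Gsym : forall x y, G x y -> G y x.
Hypothesis Girr : forall x, ~~ G x x.
Hypothesis Ge : forall i, G (e i).1 (e i).2.
Local Notation mon := 'X_{1..N}.
Local Notation mle := (@mle N).
Local Open Scope multi_scope.

Definition U (x : 'I_N) : mon := U_(x).
Definition ed x y := U x + U y.
Definition E1 (m : mon) := exists x y, G x y /\ m = ed x y.
Definition En (n : nat) := Epow E1 n.
Definition em i := ed (e i).1 (e i).2.
Definition ep i (b : bool) := if b then (e i).1 else (e i).2.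

Lemma UE x z : U x z = (x == z) :> nat.
Proof. exact: mnm1E. Qed.

Ltac pw := let z := fresh "z" in apply/mnmP => z; rewrite ?mnmDE ?mnm0E.

Lemma em_ep i b : em i = ed (ep i b) (ep i (~~ b)).
Proof. by case: b => //; rewrite /em /ed addmC. Qed.

Lemma En0 b : En 0 b -> b = 0%MM. Proof. by []. Qed.

Lemma En_add n m x y : En n x -> En m y -> En (n + m) (x + y).
Proof.
elim: n x => [|n IH] x /=; first by move=> -> Hy; rewrite add0m.
move=> [a [b [Ha [Hb ->]]]] Hy; exists a, (b + y); split => //; split.
  exact: IH. by rewrite addmA.
Qed.

Lemma En_em i : En 1 (em i).
Proof. by exists (em i), 0%MM; split; [exists (e i).1, (e i).2| rewrite addm0]. Qed.

Lemma En_ed x y : G x y -> En 1 (ed x y).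
Proof. by move=> H; exists (ed x y), 0%MM; split; [exists x, y| rewrite addm0]. Qed.

Lemma En_deg n b : En n b -> mdeg b = (2 * n)%N.
Proof.
elim: n b => [|n IH] b /=; first by move=> ->; rewrite mdeg0.
move=> [x [c [[u [v [_ ->]]] [Hc ->]]]]; rewrite !mdegD !mdeg1 (IH _ Hc); lia.
Qed.

Lemma mdeg_le a b : mle a b -> (mdeg a <= mdeg b)%N.
Proof. by move=> H; rewrite !mdegE; apply: leq_sum => i _; exact: H. Qed.

Lemma En_extract n b z : En n.+1 b -> (0 < b z)%N ->
  exists y b', G z y /\ En n b' /\ b = ed z y + b'.
Proof.
elim: n b => [|n IH] b.
  move=> [x [c [[u [v [Guv ->]]] [Hc ->]]]]; rewrite (En0 Hc) mnmDE mnm0E addn0 !mnmDE !UE.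
  case: (eqVneq u z) => [<- _|Huz]; first by exists v, 0%MM.
  case: (eqVneq v z) => [<- _|Hvz //]; exists u, 0%MM; split; first exact: Gsym.
  by split => //; rewrite /ed [U u + _]addmC.
move=> [x [c [[u [v [Guv ->]]] [Hc ->]]]]; rewrite !mnmDE !UE.
case: (eqVneq u z) => [<- _|Huz]; first by exists v, c.
case: (eqVneq v z) => [<- _|Hvz /= Hcz].
  by exists u, c; split; [exact: Gsym| split => //; rewrite /ed [U v + _]addmC].
have [y [b' [Gzy [Hb' ->]]]] := IH _ Hc Hcz.
exists y, (ed u v + b'); split => //; split.
  by exists (ed u v), b'; split => //; exists u, v.
by rewrite addmA [ed u v + _]addmC addmA.
Qed.

Inductive path : {set 'I_s} -> 'I_N -> 'I_N -> Prop :=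
| P0 u v : G u v -> path set0 u v
| PS u i b (D : {set 'I_s}) v : G u (ep i b) -> i \notin D -> path D (ep i (~~ b)) v -> path (i |: D) u v.

Lemma path_cat D1 u c : path D1 u c -> forall i b D2 v, c = ep i b ->
  path D2 (ep i (~~ b)) v -> i \notin D1 -> i \notin D2 -> [disjoint D1 & D2] ->
  path (i |: (D1 :|: D2)) u v.
Proof.
elim=> {D1 u c} [u c Guc|u j b' D c Gu jD Hp IH] i b D2 v Ec Hp2 iD1 iD2 Hdis.
  by rewrite set0U; rewrite Ec in Guc; exact: PS Guc iD2 Hp2.
have Hij : j != i by apply: contraNneq iD1 => ->; rewrite setU11.
have iD : i \notin D by apply: contra iD1 => H; rewrite setU1r.
have Hdis' : [disjoint D & D2].
  by apply: disjointWl Hdis; apply/subsetP => x Hx; rewrite setU1r.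
have jD2 : j \notin D2.
  by rewrite (disjointFr Hdis) // setU11.
have -> : i |: ((j |: D) :|: D2) = j |: (i |: (D :|: D2)).
  by apply/setP => x; rewrite !inE; case: (x == i); case: (x == j).
apply: PS Gu _ (IH _ _ _ _ Ec Hp2 iD iD2 Hdis').
by rewrite !inE negb_or (eq_sym j i) in Hij *; rewrite Hij /= negb_or jD jD2.
Qed.

Lemma path_rev D u v : path D u v -> path D v u.
Proof.
elim=> {D u v} [u v Guv|u i b D v Gu iD Hp IH]; first by apply: P0; apply: Gsym.
have := path_cat IH (i:=i) (b:=~~b) (D2:=set0) (v:=u) erefl.
rewrite negbK setU0; apply => //; last by rewrite -setI_eq0 setI0.
  by apply: P0; apply: Gsym.
by rewrite inE.
Qed.

Lemma path_split D x v : path D x v -> forall i, i \in D ->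
  exists b (D1 D2 : {set 'I_s}), D1 \subset D /\ path D1 x (ep i b) /\ i \notin D2 /\ path D2 (ep i (~~ b)) v.
Proof.
elim=> {D x v} [u v _|u j b' D v Gu jD Hp IH] i; first by rewrite inE.
case: (eqVneq i j) => [-> _|Hij].
  by exists b', set0, D; split; [exact: sub0set| split; [exact: P0|]].
rewrite !inE (negbTE Hij) /= => iD.
have [b [D1 [D2 [sD1 [Hp1 [iD2 Hp2]]]]]] := IH i iD.
exists b, (j |: D1), D2; split; first by apply: setUS.
split => //; apply: PS Gu _ Hp1.
by apply: contra jD => /(subsetP sD1).
Qed.

Section NoSq.
Hypothesis NoSq : forall D y, ~ path D y y.

Lemma path_ext z i b0 D v : G z (ep i b0) -> path D (ep i (~~ b0)) v -> exists D', path D' z v.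
Proof.
move=> Gz Hp; case: (boolP (i \in D)) => iD; last by exists (i |: D); apply: PS Gz iD Hp.
have [b [D1 [D2 [_ [Hp1 [iD2 Hp2]]]]]] := path_split Hp iD.
case: (eqVneq b b0) => [Eb|Eb].
  by exists (i |: D2); apply: PS Gz iD2 _; rewrite -Eb.
have Eb' : b = ~~ b0 by move: Eb; clear; case: b; case: b0.
by exfalso; apply: (NoSq (D:=D1) (y:=ep i (~~ b0))); rewrite -{2}Eb'.
Qed.

Definition SR (R : seq 'I_s) := \sum_(i <- R) em i.

Lemma sum_pos (R : seq 'I_s) (f : 'I_s -> nat) : (0 < \sum_(i <- R) f i)%N -> exists i, i \in R /\ (0 < f i)%N.
Proof.
elim: R => [|j R IH]; first by rewrite big_nil.
rewrite big_cons; case: (posnP (f j)) => [-> /IH [i [Hi Hf]]|Hj _].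
  by exists i; rewrite inE Hi orbT.
by exists j; rewrite inE eqxx.
Qed.

Lemma SR_deg R : mdeg (SR R) = (2 * size R)%N.
Proof.
rewrite /SR mdeg_sum; elim: R => [|j R IH]; first by rewrite big_nil.
by rewrite big_cons IH /em /ed mdegD !mdeg1 /=; lia.
Qed.

Lemma PF n : forall (R : seq 'I_s) w b, size R = n -> En n.+1 b -> mle b (w + SR R) ->
  exists u v D, mle (U u + U v) w /\ path D u v.
Proof.
elim: n => [|n IH] R w b HR Hb Hle.
  case: R HR Hle => // _ Hle.
  move: Hb => [x [c [[u [v [Guv Ex]]] [Hc Eb]]]].
  rewrite Eb Ex (En0 Hc) in Hle; exists u, v, set0; split; last exact: P0.
  move=> z; have := Hle z; rewrite /SR big_nil /ed !mnmDE mnm0E; lia.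
have [z Hz] : exists z, (SR R z < b z)%N.
  apply/existsP; apply: contraT; rewrite negb_exists => /forallP H.
  have : (mdeg b <= mdeg (SR R))%N by apply: mdeg_le => z; have := H z; rewrite -leqNgt.
  by rewrite (En_deg Hb) SR_deg HR; lia.
have Hwz : (0 < w z)%N by have := Hle z; rewrite mnmDE; lia.
have Hbz : (0 < b z)%N by lia.
have [p1 [b' [Gzp [Hb' Eb]]]] := En_extract Hb Hbz.
have Hzp : z != p1 by apply/eqP => E; move: (Girr z); rewrite {2}E Gzp.
case: (posnP (SR R p1)) => HRp.
  exists z, p1, set0; split; last exact: P0.
  move=> x; move: (Hle x) (Hle p1); rewrite Eb /ed !mnmDE !UE HRp eqxx (negbTE Hzp).
  have [<-|Hzx] := eqVneq z x.
    rewrite (eq_sym p1 z) (negbTE Hzp); lia.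
  have [<-|Hpx] := eqVneq p1 x; first lia.
  lia.
have [i [iR Hi]] : exists i, i \in R /\ (0 < em i p1)%N.
  by apply: sum_pos; move: HRp; rewrite /SR mnm_sumE.
have [b0 Ep1] : exists b0, p1 = ep i b0.
  move: Hi; rewrite /em /ed mnmDE !UE.
  case: (eqVneq (e i).1 p1) => [<-|_]; first by exists true.
  case: (eqVneq (e i).2 p1) => [<-|//]; by exists false.
set p2 := ep i (~~ b0).
have ESR : SR R = em i + SR (rem i R).
  by rewrite /SR (perm_big _ (perm_to_rem iR)) big_cons.
set w0 := (w - U z)%MM.
have Ew : w = U z + w0 by pw; rewrite mnmBE UE; case: (eqVneq z z0) => [<-|]; lia.
have HR' : size (rem i R) = n by rewrite size_rem // HR.
have Hle' : mle b' ((w0 + U p2) + SR (rem i R)).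
  move=> x; have := Hle x; rewrite Eb ESR (em_ep i b0) -Ep1 /ed Ew !mnmDE -/p2; lia.
have [u' [v' [D [Hl Hp]]]] := IH _ _ _ HR' Hb' Hle'.
have Hgo : forall v'' D'', path D'' p2 v'' -> mle (U p2 + U v'') (w0 + U p2) ->
    exists u v D, mle (U u + U v) w /\ path D u v.
  move=> v'' D'' Hp'' Hl''; have Gz' : G z (ep i b0) by rewrite -Ep1.
  have [D' HD'] := path_ext Gz' Hp''.
  exists z, v'', D'; split => // x; have := Hl'' x; rewrite Ew !mnmDE; lia.
case: (eqVneq u' p2) => [Eu|Hu]; first by rewrite Eu in Hp Hl; apply: (Hgo v' D).
case: (eqVneq v' p2) => [Ev|Hv].
  rewrite Ev in Hp Hl; apply: (Hgo u' D); first exact: path_rev.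
  by move=> x; have := Hl x; rewrite !mnmDE; lia.
exists u', v', D; split => // x; have := Hl x; rewrite Ew !mnmDE !UE.
case: (eqVneq p2 x) => [<-|_]; last lia.
by rewrite (negbTE Hu) (negbTE Hv).
Qed.

End NoSq.

Lemma En_big (I : Type) (r : seq I) (f : I -> nat) (F : I -> mon) :
  (forall i, En (f i) (F i)) -> En (\sum_(i <- r) f i)%N (\sum_(i <- r) F i).
Proof.
move=> H; elim: r => [|j r IH]; first by rewrite !big_nil.
by rewrite !big_cons; apply: En_add.
Qed.

Lemma En_muln i k : En k (em i *+ k).
Proof.
elim: k => [|k IH]; first by rewrite mulm0n.
by rewrite mulmS -add1n; apply: En_add => //; exact: En_em.
Qed.

Lemma En_set (A : {set 'I_s}) : En #|A| (\sum_(i in A) em i).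
Proof.
rewrite -big_enum cardE -sum1_size; apply: En_big => i; exact: En_em.
Qed.

Lemma PK D u v : path D u v -> En #|D|.+1 (U u + U v + \sum_(i in D) em i).
Proof.
elim=> {D u v} [u v Guv|u i b D v Gu iD Hp IH].
  by rewrite cards0 big_set0 addm0; exact: En_ed.
rewrite cardsU1 big_setU1 //.
have -> : ((i \notin D) + #|D|).+1 = (1 + #|D|.+1)%N by rewrite iD.
have -> : U u + U v + (em i + \sum_(i in D) em i) =
   ed u (ep i b) + (U (ep i (~~ b)) + U v + \sum_(i in D) em i).
  by rewrite (em_ep i b) /ed; pw; lia.
by apply: En_add => //; exact: En_ed.
Qed.

Definition E := \sum_(i < s) em i.
Definition Km w := exists b, En s.+1 b /\ mle b (w + E).

Lemma Km_mono w w' : Km w -> mle w w' -> Km w'.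
Proof. by move=> [b [Hb Hl]] H; exists b; split => // z; have := Hl z; have := H z; rewrite !mnmDE; lia. Qed.

Lemma path_K D u v w : path D u v -> mle (U u + U v) w -> Km w.
Proof.
move=> Hp Hl; exists ((U u + U v + \sum_(i in D) em i) + \sum_(i in ~: D) em i); split.
  have := En_add (PK Hp) (En_set (~: D)).
  by rewrite addSn cardsC card_ord.
have -> : E = \sum_(i in D) em i + \sum_(i in ~: D) em i.
  rewrite /E (bigID (fun i => i \in D)) /=; congr (_ + _).
  by apply: eq_bigl => i; rewrite inE.
move=> z; have := Hl z; rewrite !mnmDE; lia.
Qed.

Variable a : 'I_s -> nat.
Definition xem := \sum_(i < s) em i *+ a i.
Definition Jm w := exists b, En (\sum_(i < s) a i)%N.+1 b /\ mle b (w + xem).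

Lemma Jm_mono w w' : Jm w -> mle w w' -> Jm w'.
Proof. by move=> [b [Hb Hl]] H; exists b; split => // z; have := Hl z; have := H z; rewrite !mnmDE; lia. Qed.

Lemma K_J w : (forall i, 0 < a i)%N -> Km w -> Jm w.
Proof.
move=> Ha [b [Hb Hl]]; exists (b + \sum_(i < s) em i *+ (a i).-1); split.
  have -> : (\sum_(i < s) a i)%N = (s + \sum_(i < s) (a i).-1)%N.
    have -> : (\sum_(i < s) a i = \sum_(i < s) (a i).-1 + \sum_(i < s) 1)%N.
      by rewrite -big_split; apply: eq_bigr => i _ /=; have := Ha i; lia.
    by rewrite sum1_card card_ord addnC.
  rewrite -addSn; apply: En_add Hb _; apply: En_big => i; exact: En_muln.
have -> : xem = E + \sum_(i < s) em i *+ (a i).-1.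
  rewrite /xem /E -big_split /=; apply: eq_bigr => i _.
  by rewrite -mulmS prednK.
move=> z; have := Hl z; rewrite !mnmDE; lia.
Qed.

Lemma J_deg w : Jm w -> (2 <= mdeg w)%N.
Proof.
move=> [b [Hb Hl]]; have := mdeg_le Hl; rewrite (En_deg Hb) mdegD /xem mdeg_sum.
have -> : (\sum_(i < s) mdeg (em i *+ a i) = 2 * \sum_(i < s) a i)%N.
  rewrite big_distrr /=; apply: eq_bigr => i _.
  by rewrite mdegMn /em /ed mdegD !mdeg1.
lia.
Qed.

Lemma SR_nseq k j : SR (nseq k j) = em j *+ k.
Proof.
elim: k => [|k IH]; first by rewrite /SR big_nil mulm0n.
by move: IH; rewrite /SR /= big_cons => ->; rewrite mulmS.
Qed.

Lemma listR (r : seq 'I_s) : exists R, size R = (\sum_(i <- r) a i)%N /\ SR R = \sum_(i <- r) em i *+ a i.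
Proof.
elim: r => [|j r [R [HR ER]]]; first by exists [::]; rewrite /SR !big_nil.
exists (nseq (a j) j ++ R); rewrite size_cat size_nseq HR !big_cons; split => //.
by rewrite /SR big_cat /= -!/(SR _) SR_nseq ER.
Qed.

Section Hsq.
Hypothesis Hsq : forall m, Jm m -> exists q : mon, (forall z, q z <= 1)%N /\ mle q m /\ Jm q.
Hypothesis Ha : forall i, (0 < a i)%N.

Lemma NoSq_of D y : ~ path D y y.
Proof.
move=> Hp; have HK : Km (U y + U y) by apply: path_K Hp _ => z.
have [q [Hq [Hqm HJ]]] := Hsq (K_J Ha HK).
have HJ' : Jm (U y) by apply: Jm_mono HJ _ => z; have := Hq z; have := Hqm z; rewrite !mnmDE UE; case: (y == z) => /=; lia.
by have := J_deg HJ'; rewrite mdeg1.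
Qed.

Lemma J_K w : Jm w -> Km w.
Proof.
move=> /Hsq [q [_ [Hqw [b [Hb Hl]]]]].
have [R [HR ER]] := listR (index_enum 'I_s).
have Hl' : mle b (q + SR R) by rewrite ER.
rewrite -HR in Hb.
have [u [v [D [Huv Hp]]]] := PF NoSq_of (n := size R) erefl (b:=b) (w:=q) Hb Hl'.
by apply: Km_mono Hqw; apply: path_K Hp Huv.
Qed.

Variable i0 : 'I_s.
Hypothesis Hi0 : nat_of_ord i0 = 0%N.
Definition E' := \sum_(i < s | (0 < i)%N) em i.
Definition Q1 (g : mon) := exists b, En 2 b /\ mle b (g + em i0).
Definition Q1pw n := Epow Q1 n.
Definition Lm w := exists g, Q1pw s g /\ mle g (w + E').

Lemma E_split : E = em i0 + E'.
Proof.
rewrite /E (bigD1 i0) //=; congr (_ + _); apply: eq_bigl => i.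
by rewrite lt0n -Hi0 val_eqE.
Qed.

Lemma En_Q1 n b : En n b -> Q1pw n b.
Proof.
elim: n b => [|n IH] b //= [x [c [Hx [Hc ->]]]]; exists x, c; split; last by split => //; exact: IH.
exists (x + em i0); split; last by move=> z.
have := En_add (n:=1) (m:=1) _ (En_em i0); apply.
by exists x, 0%MM; split => //; rewrite addm0.
Qed.

Lemma KL n x b : En n.+1 b -> mle b (x + em i0) -> exists g, Q1pw n g /\ mle g x.
Proof.
move=> Hb Hl.
have fin : forall b1, En n b1 -> mle b1 x -> exists g, Q1pw n g /\ mle g x.
  by move=> b1 H1 H2; exists b1; split => //; exact: En_Q1.
set c := (e i0).1; set d := (e i0).2.
have Hcd : c != d by apply/eqP => E; move: (Girr c) (Ge i0); rewrite -/c -/d {2}E => /negbTE ->.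
have Eem : em i0 = U c + U d by [].
rewrite Eem in Hl.
case: (posnP (b c)) => Hbc.
  case: (posnP (b d)) => Hbd.
    move: Hb => [y [b1 [_ [Hb1 Eb]]]]; apply: (fin b1 Hb1) => z.
    have := Hl z; rewrite Eb !mnmDE !UE.
    have [<-|_] := eqVneq c z; first by move: Hbc; rewrite Eb mnmDE; lia.
    have [<-|_] := eqVneq d z; first by move: Hbd; rewrite Eb mnmDE; lia.
    lia.
  have [d' [b1 [_ [Hb1 Eb]]]] := En_extract Hb Hbd.
  apply: (fin b1 Hb1) => z; have := Hl z; rewrite Eb /ed !mnmDE !UE.
  have [<-|_] := eqVneq c z; last lia.
  by move: Hbc; rewrite Eb /ed !mnmDE; lia.
have [c' [b1 [Gcc [Hb1 Eb]]]] := En_extract Hb Hbc.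
have [Ec'|Hc'] := eqVneq c' d.
  apply: (fin b1 Hb1) => z; have := Hl z; rewrite Eb /ed Ec' !mnmDE; lia.
case: (posnP (b1 d)) => Hb1d.
  apply: (fin b1 Hb1) => z; have := Hl z; rewrite Eb /ed !mnmDE !UE.
  have [<-|_] := eqVneq d z; last lia.
  by rewrite Hb1d.
case: n Hb Hb1 {fin} => [|n] Hb Hb1; first by move: Hb1d; rewrite (En0 Hb1) mnm0E.
have [d' [b2 [Gdd [Hb2 Eb1]]]] := En_extract Hb1 Hb1d.
exists ((U c' + U d') + b2); split.
  exists (U c' + U d'), b2; split; last by split => //; exact: En_Q1.
  exists (ed c c' + ed d d'); split.
    by have := En_add (En_ed Gcc) (En_ed Gdd).
  by move=> z; rewrite Eem /ed !mnmDE; lia.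
move=> z; have := Hl z; rewrite Eb Eb1 /ed !mnmDE; lia.
Qed.

Lemma K_L w : Km w -> Lm w.
Proof.
move=> [b [Hb Hl]].
have Hl' : mle b ((w + E') + em i0) by move=> z; have := Hl z; rewrite E_split !mnmDE; lia.
have [g [Hg Hgl]] := KL Hb Hl'; by exists g.
Qed.

Lemma Q1pw_En n g : Q1pw n g -> exists b, En (n + n) b /\ mle b (g + em i0 *+ n).
Proof.
elim: n g => [|n IH] g; first by move=> /= ->; exists 0%MM; split => [//|z]; rewrite !mnmDE; lia.
move=> [g1 [g2 [[b1 [Hb1 Hl1]] [Hg2 ->]]]]; have [b2 [Hb2 Hl2]] := IH _ Hg2.
exists (b1 + b2); split.
  have -> : (n.+1 + n.+1 = 2 + (n + n))%N by lia.
  exact: En_add Hb1 Hb2.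
by move=> z; have := Hl1 z; have := Hl2 z; rewrite mulmS !mnmDE; lia.
Qed.

Hypothesis Hs : (0 < s)%N.

Lemma L_K w : Lm w -> Km w.
Proof.
move=> [g [Hg Hgl]]; have [b [Hb Hl]] := Q1pw_En Hg.
set R := nseq s.-1 i0 ++ index_enum 'I_s.
have HR : size R = (s.-1 + s)%N by rewrite size_cat size_nseq -[size (index_enum _)]sum1_size sum1_card card_ord.
have ER : SR R = em i0 *+ s.-1 + E by rewrite /SR big_cat /= -!/(SR _) SR_nseq.
have Hb' : En (size R).+1 b by rewrite HR -addSn prednK.
have Hl' : mle b (w + SR R).
  move=> z; have := Hl z; have := Hgl z; rewrite ER E_split -{1}(prednK Hs) mulmS !mnmDE; lia.
have [u [v [D [Huv Hp]]]] := PF NoSq_of erefl Hb' Hl'.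
exact: path_K Hp Huv.
Qed.

End Hsq.
End Comb.

Local Open Scope ring_scope.

Theorem lemma3p3 (k : fieldType) (N : nat) (G : rel 'I_N)
  (s : nat) (hs : (0 < s)%N) (e : 'I_s -> 'I_N * 'I_N) (a : 'I_s -> nat) :
  simple_graph G ->
  (forall i, G (e i).1 (e i).2) ->
  (forall i j, i != j -> [set (e i).1; (e i).2] != [set (e j).1; (e j).2]) ->
  (forall i, (0 < a i)%N) ->
  let t := (\sum_(i < s) a i).+1 in
  let xe : {mpoly k[N]} := \prod_(i < s) edge_mon k (e i) ^+ a i in
  let I : {mpoly k[N]} -> Prop := edge_ideal G in
  squarefree_monomial_ideal (ideal_colon (ideal_pow I t) xe) ->
  ideal_eq (ideal_colon (ideal_pow I t) xe)
           (ideal_colon (ideal_pow I s.+1) (\prod_(i < s) edge_mon k (e i)))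
  /\
  ideal_eq (ideal_colon (ideal_pow I s.+1) (\prod_(i < s) edge_mon k (e i)))
           (ideal_colon
              (ideal_pow (ideal_colon (ideal_pow I 2) (edge_mon k (e (Ordinal hs)))) s)
              (\prod_(i < s | (0 < i)%N) edge_mon k (e i))).
Proof.
move=> [Gsym' Girr'] Ge _ Ha t xe I Hsq.
have Gsym : forall x y, G x y -> G y x by move=> x y; rewrite Gsym'.
have Girr : forall x, ~~ G x x by move=> x; rewrite Girr'.
set i0 := Ordinal hs.
have Hi0 : nat_of_ord i0 = 0%N by [].
have HI : ideal_eq I (MI (E1 G)).
  apply: gen_ext => p; split.
    by move=> [x [y [Gxy ->]]]; exists (ed x y); rewrite /ed mpolyXD; split => //; exists x, y.
  by move=> [m [[x [y [Gxy ->]]] ->]]; exists x, y; rewrite /ed mpolyXD.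
have Hpow : forall n, ideal_eq (ideal_pow I n) (MP (DS (En G n))).
  move=> n; apply: ieq_trans (pow_ext n HI) _.
  exact: ieq_trans (MI_pow _ _) (MI_MP _).
have Hedge : forall i, edge_mon k (e i) = 'X_[em e i].
  by move=> i; rewrite /edge_mon /em /ed mpolyXD.
have Hxe : xe = 'X_[xem e a].
  by rewrite /xe; under eq_bigr do rewrite Hedge; rewrite mprodXnE.
have HE : \prod_(i < s) edge_mon k (e i) = 'X_[E e].
  by under eq_bigr do rewrite Hedge; rewrite mprodXE.
have HE' : \prod_(i < s | (0 < i)%N) edge_mon k (e i) = 'X_[E' e].
  by under eq_bigr do rewrite Hedge; rewrite mprodXE.
have HJ : ideal_eq (ideal_colon (ideal_pow I t) xe) (MP (Jm G e a)).
  rewrite Hxe; apply: ieq_trans (colon_ext _ (Hpow t)) _.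
  exact: colon_MP.
have HK : ideal_eq (ideal_colon (ideal_pow I s.+1) (\prod_(i < s) edge_mon k (e i))) (MP (Km G e)).
  rewrite HE; apply: ieq_trans (colon_ext _ (Hpow s.+1)) _.
  exact: colon_MP.
have HQ1 : ideal_eq (ideal_colon (ideal_pow I 2) (edge_mon k (e i0))) (MI (Q1 G e i0)).
  rewrite Hedge; apply: ieq_trans (colon_ext _ (Hpow 2)) _.
  apply: ieq_trans (colon_MP _ _) _.
  apply: MP_MI => m m' [b [Hb Hl]] H; exists b; split => // z.
  by have := Hl z; have := H z; rewrite !mnmDE; lia.
have HL : ideal_eq (ideal_colon (ideal_pow (ideal_colon (ideal_pow I 2) (edge_mon k (e i0))) s)
              (\prod_(i < s | (0 < i)%N) edge_mon k (e i))) (MP (Lm G e i0)).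
  rewrite HE'; apply: ieq_trans (colon_ext _ (pow_ext s HQ1)) _.
  apply: ieq_trans (colon_ext _ (ieq_trans (MI_pow _ _) (MI_MP _))) _.
  exact: colon_MP.
have Hsq' : forall m, Jm G e a m -> exists q : 'X_{1..N}, (forall z, q z <= 1)%N /\ mle q m /\ Jm G e a q.
  move: Hsq => [S' [HS' HJS]] m Hm.
  have H1 : ideal_gen S' 'X_[m] by apply/HJS/HJ/MP_X.
  have H2 : MI (k:=k) (fun q => S' 'X_[q] /\ forall z, (q z <= 1)%N) 'X_[m].
    move: H1; apply: gen_sub => p Hp; apply: gen_base.
    have [q [Eq Hq]] := HS' p Hp; exists q; split => //; split => //; by rewrite -Eq.
  have Hmm : m \in msupp (R:=k) 'X_[m] by rewrite msuppX mem_seq1.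
  have [q [[Sq Hq] Hqm]] := (proj1 (MI_char _ _) H2) m Hmm.
  exists q; split => //; split => //.
  by apply/MP_X/HJ/HJS; apply: gen_base.
have HJK : forall m, Jm G e a m <-> Km G e m.
  move=> m; split; first exact: (J_K Gsym Girr Ge Hsq' Ha).
  exact: K_J.
have HKL : forall m, Km G e m <-> Lm G e i0 m.
  move=> m; split; first exact: (K_L Gsym Girr Ge Hi0).
  exact: (L_K Gsym Girr Ge Hsq' Ha Hi0 hs).
split.
  apply: ieq_trans HJ _; apply: ieq_trans (MP_ext HJK) _; exact: ieq_sym HK.
apply: ieq_trans HK _; apply: ieq_trans (MP_ext HKL) _; exact: ieq_sym HL.
Qed.
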